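(* Let $0<\delta\le1$, $1\le\alpha_n\le\log n$, let $\sigma(x)=1/(1+e^{-x})$ be the logistic squasher, let $m:\mathbb{R}^d\to\mathbb{R}$ be Lipschitz continuous with Lipschitz constant $C_{Lip}$, let $L,r,n\in\mathbb{N}$ with $L\ge2$, $r\ge2d$, $n\ge8d$, $n\ge\exp(r+1)$, and let $K,K_n\in\mathbb{N}$ with $K^d\le K_n$. Let $a_1,\dots,a_d,b_1,\dots,b_d\in[-\alpha_n,\alpha_n]$ with $b_i-a_i=\Delta$ for all $i\in\{1,\dots,d\}$, where $\Delta>0$. Then there exist $\alpha_1,\dots,\alpha_{K^d}\in[-\|m\|_\infty,\|m\|_\infty]$ and $u_1,v_1,\dots,u_{K^d},v_{K^d}\in[a_1,b_1)\times\dots\times[a_d,b_d)$ such that the following holds. For all pairwise distinct $j_1,\dots,j_{K^d}\in\{1,\dots,K_n\}$, every weight vector $\mathbf{w}$ satisfying, for all $k\in\{1,\dots,K^d\}$, $w^{(0)}_{j_k,j,j}=\frac{4d(\log n)^2}{\delta}$, $w^{(0)}_{j_k,j,0}=-\frac{4d(\log n)^2u_k^{(j)}}{\delta}$, $w^{(0)}_{j_k,j+d,j}=-\frac{4d(\log n)^2}{\delta}$, $w^{(0)}_{j_k,j+d,0}=\frac{4d(\log n)^2v_k^{(j)}}{\delta}$ for $j\in\{1,\dots,d\}$; $w^{(0)}_{j_k,s,t}=0$ if $s\le2d$, $s\ne t$, $s\ne t+d$, $t>0$; $w^{(1)}_{j_k,1,t}=8(\log n)^2$ for $t\in\{1,\dots,2d\}$,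 $w^{(1)}_{j_k,1,0}=-8(\log n)^2(2d-\frac12)$, $w^{(1)}_{j_k,1,t}=0$ for $t>2d$; $w^{(l)}_{j_k,1,1}=6(\log n)^2$, $w^{(l)}_{j_k,1,0}=-3(\log n)^2$ and $w^{(l)}_{j_k,1,t}=0$ for $t>1$, for $l\in\{2,\dots,L\}$; and every weight vector $\bar{\mathbf{w}}$ satisfying $\bar w^{(L)}_{1,1,j_k}=\alpha_k$ ($k\in\{1,\dots,K^d\}$), $\bar w^{(L)}_{1,1,k}=0$ ($k\notin\{j_1,\dots,j_{K^d}\}$) and $|w^{(l)}_{j_s,k,i}-\bar w^{(l)}_{j_s,k,i}|\le\log n$ for all $k,i$, $l\in\{0,\dots,L-1\}$, $s\in\{1,\dots,K^d\}$, we have \[ |f_{\bar{\mathbf{w}}}(x)-m(x)|\le c_{19}\Big(C_{Lip}\cdot\frac{\Delta}{K}+K^d\cdot\frac1n\Big) \] for all $x\in[a_1,b_1]\times\dots\times[a_d,b_d]$ which are not contained in \[ \bigcup_{j\in\{0,1,\dots,K\}}\bigcup_{i\in\{1,\dots,d\}}\Big\{x\in\mathbb{R}^d:\Big|x^{(i)}-\Big(a_i+j\cdot\frac{b_i-a_i}{K}\Big)\Big|<\delta\Big\}, \] where $c_{19}>0$ is a constant depending only on $d$ and $\|m\|_\infty$; and, if additionally $\delta\le\Delta/K$, then $|f_{\bar{\mathbf{w}}}(x)|\le\|m\|_\infty\cdot(3^d+K^d/n)$ for all $x\in\mathbb{R}^d$.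
   Context: For a weight vector $\bar{\mathbf{w}}=(\bar w^{(l)}_{k,i,j})$, $f_{\bar{\mathbf{w}}}(x)=\sum_{j=1}^{K_n}\bar w^{(L)}_{1,1,j}\bar f^{(L)}_{j,1}(x)$, where for $k\in\{1,\dots,K_n\}$, $i\in\{1,\dots,r\}$: $\bar f^{(l)}_{k,i}(x)=\sigma\big(\sum_{j=1}^r\bar w^{(l-1)}_{k,i,j}\bar f^{(l-1)}_{k,j}(x)+\bar w^{(l-1)}_{k,i,0}\big)$ for $l=2,\dots,L$ and $\bar f^{(1)}_{k,i}(x)=\sigma\big(\sum_{j=1}^d\bar w^{(0)}_{k,i,j}x^{(j)}+\bar w^{(0)}_{k,i,0}\big)$. $x^{(j)}$ and $u_k^{(j)}$ denote $j$-th components; $\|m\|_\infty=\sup_x|m(x)|$. *)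

(* Defs.v *)
(* concrete reals R. Points of R^d are represented as
   functions nat -> R, of which only the coordinates 1..d are ever read. *)
From Stdlib Require Import Reals.
Open Scope R_scope.

Fixpoint sum1 (n : nat) (f : nat -> R) : R :=
  match n with
  | O => 0
  | S p => sum1 p f + f (S p)
  end.

Definition sigma (x : R) : R := 1 / (1 + exp (- x)).

Definition dist_d (d : nat) (x y : nat -> R) : R :=
  sqrt (sum1 d (fun i => (x i - y i) ^ 2)).

(* Weight vectors: w l k i j  stands for  w^{(l)}_{k,i,j}. *)
Definition weights := nat -> nat -> nat -> nat -> R.

(* hid w d r l k i x  =  \bar f^{(l+1)}_{k,i}(x) *)
Fixpoint hid (w : weights) (d r : nat) (l : nat) (k i : nat) (x : nat -> R) : R :=
  match l with
  | O => sigma (sum1 d (fun j => w 0%nat k i j * x j) + w 0%nat k i 0%nat)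
  | S p => sigma (sum1 r (fun j => w (S p) k i j * hid w d r p k j x)
                  + w (S p) k i 0%nat)
  end.

Definition fnet (w : weights) (d r L Kn : nat) (x : nat -> R) : R :=
  sum1 Kn (fun j => w L 1%nat 1%nat j * hid w d r (L - 1) j 1%nat x).

Definition sup_norm_is (m : (nat -> R) -> R) (M : R) : Prop :=
  is_lub (fun y => exists x, y = Rabs (m x)) M.

Definition lipschitz_d (d : nat) (m : (nat -> R) -> R) (C : R) : Prop :=
  forall x y, Rabs (m x - m y) <= C * dist_d d x y.

(* Main.v *)
Require Import Defs.
From Stdlib Require Import Reals.
Open Scope R_scope.
From Stdlib Require Import Lra Lia ZArith Classical.
Local Notation sig := Defs.sigma.


Lemma exp_le' : forall x y, x <= y -> exp x <= exp y.
Proof. intros x y [H|H]. left; apply exp_increasing; auto. subst; lra. Qed.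

Lemma exp_sq : forall z, 0 <= z -> (1 + z/2)^2 <= exp z.
Proof.
  intros z Hz. replace z with (z/2 + z/2) at 2 by field. rewrite exp_plus.
  pose proof (exp_ineq1_le (z/2)). simpl. rewrite Rmult_1_r.
  apply Rmult_le_compat; lra.
Qed.

Lemma sigma_pos : forall z, 0 < sig z.
Proof. intros z. unfold Defs.sigma. pose proof (exp_pos (-z)).
  apply Rdiv_lt_0_compat; lra. Qed.

Lemma sigma_lt1 : forall z, sig z < 1.
Proof. intros z. unfold Defs.sigma. pose proof (exp_pos (-z)).
  apply (Rmult_lt_reg_r (1 + exp (-z))); [lra|].
  field_simplify; lra. Qed.

Lemma sigma_ge : forall z, 1 - exp (-z) <= sig z.
Proof. intros z. unfold Defs.sigma. pose proof (exp_pos (-z)).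
  apply (Rmult_le_reg_r (1 + exp (-z))); [lra|].
  field_simplify; try lra. nra. Qed.

Lemma sigma_le : forall z, sig z <= exp z.
Proof. intros z. unfold Defs.sigma. pose proof (exp_pos (-z)).
  rewrite exp_Ropp in *. pose proof (exp_pos z).
  apply (Rmult_le_reg_r (1 + / exp z)); [lra|].
  field_simplify; try lra. Qed.

Lemma hid_bounds : forall w d r l k i x, 0 < hid w d r l k i x < 1.
Proof. intros. destruct l; simpl; split; (apply sigma_pos || apply sigma_lt1). Qed.

Lemma sum1_ext : forall n f g, (forall t, (1 <= t <= n)%nat -> f t = g t) -> sum1 n f = sum1 n g.
Proof. induction n; intros f g H; simpl; auto.
  rewrite (IHn f g); [rewrite H; auto; lia|]. intros; apply H; lia. Qed.

Lemma sum1_le : forall n f g, (forall t, (1 <= t <= n)%nat -> f t <= g t) -> sum1 n f <= sum1 n g.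
Proof. induction n; intros f g H; simpl; [lra|].
  pose proof (IHn f g (fun t Ht => H t ltac:(lia))). pose proof (H (S n) ltac:(lia)). lra. Qed.

Lemma sum1_const : forall n c, sum1 n (fun _ => c) = INR n * c.
Proof. induction n; intros; simpl sum1; [simpl; ring|]. rewrite IHn, S_INR; ring. Qed.

Lemma sum1_scale : forall n c f, sum1 n (fun t => c * f t) = c * sum1 n f.
Proof. induction n; intros; simpl; [ring|]. rewrite IHn; ring. Qed.

Lemma sum1_minus : forall n f g, sum1 n f - sum1 n g = sum1 n (fun t => f t - g t).
Proof. induction n; intros; simpl; [ring|]. rewrite <- IHn; ring. Qed.

Lemma sum1_abs : forall n f g, (forall t, (1 <= t <= n)%nat -> Rabs (f t) <= g t) -> Rabs (sum1 n f) <= sum1 n g.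
Proof. induction n; intros f g H; simpl; [rewrite Rabs_R0; lra|].
  pose proof (IHn f g (fun t Ht => H t ltac:(lia))). pose proof (H (S n) ltac:(lia)).
  pose proof (Rabs_triang (sum1 n f) (f (S n))). lra. Qed.

Lemma sum1_zero : forall n f, (forall t, (1 <= t <= n)%nat -> f t = 0) -> sum1 n f = 0.
Proof. induction n; intros f H; simpl; auto. rewrite IHn, H; try lra; try lia. intros; apply H; lia. Qed.

Lemma sum1_single : forall n f j, (1 <= j <= n)%nat ->
  (forall t, (1 <= t <= n)%nat -> t <> j -> f t = 0) -> sum1 n f = f j.
Proof. induction n; intros f j Hj H; [lia|]. simpl.
  destruct (Nat.eq_dec j (S n)) as [->|Hne].
  - rewrite sum1_zero; [ring|]. intros; apply H; lia.
  - rewrite (IHn f j); [|lia|intros; apply H; lia]. rewrite (H (S n)); [ring|lia|lia]. Qed.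

Lemma sum1_trunc : forall r m f, (m <= r)%nat -> (forall t, (m < t <= r)%nat -> f t = 0) -> sum1 r f = sum1 m f.
Proof. induction r; intros m f Hm H.
  - assert (m = 0)%nat by lia. subst; auto.
  - destruct (Nat.eq_dec m (S r)) as [->|Hne]; auto.
    simpl. rewrite (IHr m f); [|lia|intros; apply H; lia]. rewrite (H (S r)); [ring|lia]. Qed.

Lemma sum1_le_drop : forall n h s, (forall t, (1 <= t <= n)%nat -> h t <= 1) -> (1 <= s <= n)%nat ->
  sum1 n h <= INR n - 1 + h s.
Proof. induction n; intros h s H Hs; [lia|]. simpl sum1. rewrite S_INR.
  destruct (Nat.eq_dec s (S n)) as [->|Hne].
  - assert (sum1 n h <= INR n). { rewrite <- (Rmult_1_r (INR n)), <- sum1_const. apply sum1_le. intros; apply H; lia. }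
    lra.
  - pose proof (IHn h s (fun t Ht => H t ltac:(lia)) ltac:(lia)). pose proof (H (S n) ltac:(lia)). lra. Qed.

Lemma sum1_split_point : forall n f k0, (1 <= k0 <= n)%nat ->
  sum1 n f = f k0 + sum1 n (fun k => if Nat.eq_dec k k0 then 0 else f k).
Proof. induction n; intros f k0 Hk; [lia|]. change (sum1 (S n) f) with (sum1 n f + f (S n)).
  change (sum1 (S n) (fun k => if Nat.eq_dec k k0 then 0 else f k)) with
    (sum1 n (fun k => if Nat.eq_dec k k0 then 0 else f k) + (if Nat.eq_dec (S n) k0 then 0 else f (S n))).
  destruct (Nat.eq_dec (S n) k0) as [<-|Hne].
  - assert (sum1 n (fun k => if Nat.eq_dec k (S n) then 0 else f k) = sum1 n f).
    { apply sum1_ext. intros t Ht. destruct (Nat.eq_dec t (S n)); [lia|auto]. }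
    rewrite H. ring.
  - rewrite (IHn f k0); [ring|lia]. Qed.

Lemma perturb : forall n (w wb y : nat -> R) lam, 0 <= lam ->
  (forall t, (t <= n)%nat -> Rabs (w t - wb t) <= lam) ->
  Rabs ((sum1 n (fun t => wb t * y t) + wb 0%nat) - (sum1 n (fun t => w t * y t) + w 0%nat))
   <= lam * (1 + sum1 n (fun t => Rabs (y t))).
Proof. intros n w wb y lam Hl H.
  replace ((sum1 n (fun t => wb t * y t) + wb 0%nat) - (sum1 n (fun t => w t * y t) + w 0%nat))
    with ((sum1 n (fun t => wb t * y t) - sum1 n (fun t => w t * y t)) + (wb 0%nat - w 0%nat)) by ring.
  rewrite sum1_minus.
  eapply Rle_trans; [apply Rabs_triang|].
  assert (Rabs (sum1 n (fun t => wb t * y t - w t * y t)) <= sum1 n (fun t => lam * Rabs (y t))).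
  { apply sum1_abs. intros t Ht. replace (wb t * y t - w t * y t) with ((wb t - w t) * y t) by ring.
    rewrite Rabs_mult. apply Rmult_le_compat_r; [apply Rabs_pos|]. rewrite Rabs_minus_sym; apply H; lia. }
  rewrite sum1_scale in H0. pose proof (H 0%nat ltac:(lia)). rewrite Rabs_minus_sym in H1. lra. Qed.

Lemma sum1_nonneg : forall n f, (forall t, (1<=t<=n)%nat -> 0 <= f t) -> 0 <= sum1 n f.
Proof. intros. rewrite <- (Rmult_0_r (INR n)), <- sum1_const. apply sum1_le; auto. Qed.

Lemma Rabs_le_between : forall a b, Rabs a <= b -> - b <= a <= b.
Proof. intros a b H. pose proof (Rle_abs a). pose proof (Rle_abs (-a)). rewrite Rabs_Ropp in H1. lra. Qed.


Fixpoint dig (K i k : nat) : nat :=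
  match i with O => (k mod K)%nat | S i' => dig K i' (k / K)%nat end.
Fixpoint enc (K D : nat) (c : nat -> nat) : nat :=
  match D with O => 0%nat | S D' => (c 0%nat + K * enc K D' (fun i => c (S i)))%nat end.

Lemma dig_lt : forall K i k, (1 <= K)%nat -> (dig K i k < K)%nat.
Proof. intros K i; induction i; intros k HK; simpl. apply Nat.mod_upper_bound; lia. auto. Qed.

Lemma enc_lt : forall K D c, (1 <= K)%nat -> (forall i, (i < D)%nat -> (c i < K)%nat) -> (enc K D c < K ^ D)%nat.
Proof. intros K D; induction D; intros c HK H; simpl; [lia|].
  pose proof (IHD (fun i => c (S i)) HK (fun i Hi => H (S i) ltac:(lia))). pose proof (H 0%nat ltac:(lia)). nia. Qed.

Lemma dig_enc : forall K D c, (1 <= K)%nat -> (forall i, (i < D)%nat -> (c i < K)%nat) ->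
  forall i, (i < D)%nat -> dig K i (enc K D c) = c i.
Proof. intros K D; induction D; intros c HK H i Hi; [lia|]. simpl.
  destruct i; simpl.
  - rewrite Nat.mul_comm, Nat.Div0.mod_add. apply Nat.mod_small, H; lia.
  - rewrite Nat.mul_comm, Nat.div_add by lia. rewrite Nat.div_small by (apply H; lia).
    simpl. apply (IHD (fun i => c (S i))); auto. intros; apply H; lia. lia. Qed.

Lemma enc_ext : forall K D c c', (forall i, (i < D)%nat -> c i = c' i) -> enc K D c = enc K D c'.
Proof. intros K D; induction D; intros c c' H; simpl; auto.
  rewrite (H 0%nat) by lia. f_equal. f_equal. apply IHD. intros; apply H; lia. Qed.

Lemma enc_dig : forall K D k, (1 <= K)%nat -> (k < K ^ D)%nat -> enc K D (fun i => dig K i k) = k.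
Proof. intros K D; induction D; intros k HK Hk; simpl in *; [lia|].
  rewrite (IHD (k / K)%nat HK). rewrite (Nat.div_mod k K) at 3 by lia. lia.
  apply Nat.Div0.div_lt_upper_bound. lia. Qed.

Lemma reindex : forall N Kn (jj : nat -> nat) (c : nat -> R),
  (forall k, (1 <= k <= N)%nat -> (1 <= jj k <= Kn)%nat) ->
  (forall k k', (1 <= k <= N)%nat -> (1 <= k' <= N)%nat -> jj k = jj k' -> k = k') ->
  (forall j, (1 <= j <= Kn)%nat -> (forall s, (1 <= s <= N)%nat -> j <> jj s) -> c j = 0) ->
  sum1 Kn c = sum1 N (fun k => c (jj k)).
Proof. induction N; intros Kn jj c Hr Hi Hz.
  - simpl. apply sum1_zero. intros t Ht. apply Hz; auto. intros; lia.
  - set (c' := fun j => if Nat.eq_dec j (jj (S N)) then 0 else c j).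
    assert (E1 : sum1 Kn c = c (jj (S N)) + sum1 Kn c').
    { apply sum1_split_point. apply Hr; lia. }
    rewrite E1. rewrite (IHN Kn jj c').
    + simpl. assert (sum1 N (fun k => c' (jj k)) = sum1 N (fun k => c (jj k))).
      { apply sum1_ext. intros t Ht. unfold c'. destruct (Nat.eq_dec (jj t) (jj (S N))) as [E|]; auto.
        apply Hi in E; lia. }
      rewrite H; ring.
    + intros; apply Hr; lia.
    + intros; apply Hi; auto; lia.
    + intros j Hj Hs. unfold c'. destruct (Nat.eq_dec j (jj (S N))); auto.
      apply Hz; auto. intros s Hs'. destruct (Nat.eq_dec s (S N)) as [->|]; auto. apply Hs; lia. Qed.

Lemma digits_differ : forall K d k k', (1 <= K)%nat -> (1 <= k <= K^d)%nat -> (1 <= k' <= K^d)%nat -> k <> k' ->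
  exists i, (1 <= i <= d)%nat /\ dig K (i-1) (k-1) <> dig K (i-1) (k'-1).
Proof. intros K d k k' HK Hk Hk' Hne. apply NNPP. intros Hno. apply Hne.
  assert (E : enc K d (fun i => dig K i (k-1)) = enc K d (fun i => dig K i (k'-1))).
  { apply enc_ext. intros i Hi. apply NNPP. intros Hd. apply Hno. exists (S i). split; [lia|].
    replace (S i - 1)%nat with i by lia. auto. }
  rewrite !enc_dig in E by lia. lia. Qed.


Definition cell (ai q xi : R) : nat := Z.to_nat (Int_part ((xi - ai) / q)).

Lemma cell_spec : forall ai q xi, 0 < q -> ai <= xi ->
  ai + INR (cell ai q xi) * q <= xi < ai + (INR (cell ai q xi) + 1) * q.
Proof. intros ai q xi Hq Hx. unfold cell.
  set (y := (xi - ai) / q).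
  assert (Hy : 0 <= y) by (unfold y; apply Rmult_le_pos; [lra|left; apply Rinv_0_lt_compat; lra]).
  destruct (base_Int_part y) as [H1 H2].
  assert (Hz : (0 <= Int_part y)%Z).
  { assert (IZR (Int_part y) > -1) by lra. apply lt_IZR in H. lia. }
  rewrite INR_IZR_INZ, Z2Nat.id by auto.
  assert (xi = ai + y * q) by (unfold y; field; lra).
  split; [|]; rewrite H at 1 2 || rewrite H; nra.
Qed.

Lemma grid_cell : forall (ai q delta xi : R) (K : nat), (1 <= K)%nat -> 0 < q -> 0 < delta ->
  ai <= xi <= ai + INR K * q ->
  (forall j, (j <= K)%nat -> ~ Rabs (xi - (ai + INR j * q)) < delta) ->
  (cell ai q xi < K)%nat /\ ai + INR (cell ai q xi) * q + delta <= xi /\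
  xi <= ai + INR (S (cell ai q xi)) * q - delta.
Proof. intros ai q delta xi K HK Hq Hd Hx Hg.
  pose proof (cell_spec ai q xi Hq (proj1 Hx)) as [C1 C2].
  set (c := cell ai q xi) in *.
  assert (Hc : (c <= K)%nat).
  { apply INR_le. apply (Rmult_le_reg_r q); auto. lra. }
  assert (HcK : (c < K)%nat).
  { destruct (Nat.eq_dec c K); [|lia]. exfalso. apply (Hg K); auto.
    rewrite e in *. rewrite Rabs_right; lra. }
  split; auto. split.
  - pose proof (Hg c ltac:(lia)). apply Rnot_lt_le in H.
    rewrite Rabs_right in H; lra.
  - pose proof (Hg (S c) ltac:(lia)). apply Rnot_lt_le in H. rewrite S_INR in *.
    rewrite Rabs_left in H; lra.
Qed.


Lemma exp_neg_le : forall z c, 0 < c -> c <= exp z -> exp (- z) <= / c.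
Proof. intros z c Hc H. rewrite exp_Ropp. apply Rinv_le_contravar; auto. Qed.

Lemma tau_small : forall lam, 3 <= lam -> exp (- lam^2) <= / 10.
Proof. intros lam H. apply exp_neg_le; [lra|]. pose proof (exp_ineq1_le (lam^2)). nra. Qed.

Lemma sig_hi : forall z lam, lam^2 <= z -> 1 - exp (- lam^2) <= sig z.
Proof. intros z lam H. pose proof (sigma_ge z). pose proof (exp_le' (-z) (-lam^2) ltac:(lra)). lra. Qed.

Lemma sig_lo : forall z lam, z <= - lam^2 -> sig z <= exp (- lam^2).
Proof. intros z lam H. pose proof (sigma_le z). pose proof (exp_le' z (-lam^2) H). lra. Qed.

Lemma sum_hid_le : forall w d r p j0 x, sum1 r (fun t => Rabs (hid w d r p j0 t x)) <= INR r.
Proof. intros. rewrite <- (Rmult_1_r (INR r)), <- sum1_const. apply sum1_le. intros t Ht.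
  pose proof (hid_bounds w d r p j0 t x). rewrite Rabs_right; lra. Qed.

Lemma deep_layers : forall (w wb : weights) (d r L j0 : nat) (lam : R) (x : nat -> R),
  3 <= lam -> INR r + 1 <= lam -> (1 <= r)%nat ->
  (forall l, (2 <= l <= L)%nat -> w l j0 1%nat 1%nat = 6*lam^2 /\ w l j0 1%nat 0%nat = -3*lam^2 /\
       forall t, (1 < t <= r)%nat -> w l j0 1%nat t = 0) ->
  (forall l i, (1 <= l <= L-1)%nat -> (i <= r)%nat -> Rabs (w l j0 1%nat i - wb l j0 1%nat i) <= lam) ->
  forall p, (1 <= p <= L-1)%nat ->
   (1 - exp(-lam^2) <= hid wb d r 1 j0 1 x -> 1 - exp(-lam^2) <= hid wb d r p j0 1 x) /\
   (hid wb d r 1 j0 1 x <= exp(-lam^2) -> hid wb d r p j0 1 x <= exp(-lam^2)).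
Proof.
  intros w wb d r L j0 lam x Hl Hr Hr1 Hw Hp p. induction p as [|p IH]; intros Hpr; [lia|].
  destruct (Nat.eq_dec p 0) as [->|Hp0]; [auto|].
  destruct IH as [IH1 IH2]; [lia|].
  assert (E : hid wb d r (S p) j0 1 x = sig (sum1 r (fun j => wb (S p) j0 1%nat j * hid wb d r p j0 j x) + wb (S p) j0 1%nat 0%nat)) by reflexivity.
  destruct (Hw (S p) ltac:(lia)) as [W1 [W0 Wt]].
  pose proof (perturb r (w (S p) j0 1%nat) (wb (S p) j0 1%nat) (fun j => hid wb d r p j0 j x) lam ltac:(lra)
     (fun t Ht => Hp (S p) t ltac:(lia) Ht)) as P.
  cbv beta in P.
  rewrite (sum1_single r (fun t => w (S p) j0 1%nat t * hid wb d r p j0 t x) 1%nat) in P; [|lia|].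
  2:{ intros t Ht Hne. cbv beta. rewrite Wt by lia. ring. }
  cbv beta in P. rewrite W1, W0 in P. pose proof (sum_hid_le wb d r p j0 x).
  assert (lam * (1 + sum1 r (fun t => Rabs (hid wb d r p j0 t x))) <= lam^2) by nra.
  pose proof (tau_small lam Hl). pose proof (hid_bounds wb d r p j0 1 x).
  apply Rabs_le_between in P. rewrite E. split; intros HH.
  - apply sig_hi. specialize (IH1 HH). nra.
  - apply sig_lo. specialize (IH2 HH). nra.
Qed.

Lemma and_layer : forall (w wb : weights) (d r j0 : nat) (lam : R) (x : nat -> R),
  3 <= lam -> INR r + 1 <= lam -> (1 <= d)%nat -> (2*d <= r)%nat ->
  (forall t, (1 <= t <= 2*d)%nat -> w 1%nat j0 1%nat t = 8*lam^2) ->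
  w 1%nat j0 1%nat 0%nat = -8*lam^2*(2*INR d - 1/2) ->
  (forall t, (2*d < t <= r)%nat -> w 1%nat j0 1%nat t = 0) ->
  (forall i, (i <= r)%nat -> Rabs (w 1%nat j0 1%nat i - wb 1%nat j0 1%nat i) <= lam) ->
  ((forall s, (1 <= s <= 2*d)%nat -> 1 - /(8*INR d) <= hid wb d r 0 j0 s x) ->
      1 - exp(-lam^2) <= hid wb d r 1 j0 1 x) /\
  ((exists s, (1 <= s <= 2*d)%nat /\ hid wb d r 0 j0 s x <= /8) -> hid wb d r 1 j0 1 x <= exp(-lam^2)).
Proof.
  intros w wb d r j0 lam x Hl Hr Hd Hdr W1 W0 Wz Hp.
  assert (E : hid wb d r 1 j0 1 x = sig (sum1 r (fun j => wb 1%nat j0 1%nat j * hid wb d r 0 j0 j x) + wb 1%nat j0 1%nat 0%nat)) by reflexivity.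
  pose proof (perturb r (w 1%nat j0 1%nat) (wb 1%nat j0 1%nat) (fun j => hid wb d r 0 j0 j x) lam ltac:(lra) Hp) as P.
  cbv beta in P.
  rewrite (sum1_trunc r (2*d) (fun t => w 1%nat j0 1%nat t * hid wb d r 0 j0 t x)) in P; auto.
  2:{ intros t Ht. cbv beta. rewrite Wz by lia. ring. }
  rewrite (sum1_ext (2*d) _ (fun t => 8*lam^2 * hid wb d r 0 j0 t x)) in P.
  2:{ intros t Ht. rewrite W1 by lia. auto. }
  rewrite sum1_scale, W0 in P.
  pose proof (sum_hid_le wb d r 0 j0 x).
  assert (lam * (1 + sum1 r (fun t => Rabs (hid wb d r 0 j0 t x))) <= lam^2) by nra.
  apply Rabs_le_between in P.
  assert (HD : 1 <= INR d) by (apply (le_INR 1); lia).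
  rewrite E. split; intros HH.
  - apply sig_hi.
    assert (sum1 (2*d) (fun t => hid wb d r 0 j0 t x) >= 2*INR d - /4).
    { eapply Rge_trans with (r2 := sum1 (2*d) (fun _ => 1 - /(8*INR d))).
      - apply Rle_ge, sum1_le. auto.
      - rewrite sum1_const, mult_INR. simpl INR. right. field. lra. }
    nra.
  - apply sig_lo. destruct HH as [s [Hs Hs']].
    pose proof (sum1_le_drop (2*d) (fun t => hid wb d r 0 j0 t x) s
      (fun t Ht => Rlt_le _ _ (proj2 (hid_bounds wb d r 0 j0 t x))) Hs).
    rewrite mult_INR in H1. simpl INR in H1. cbv beta in H1. nra.
Qed.

Lemma key6 : forall D lam, 1 <= D -> 3 <= lam -> 6 * D <= D*lam^2 - lam.
Proof. intros D lam HD Hl. assert (0 <= (lam-3)*(lam+2)) by nra.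
  assert (0 <= D * ((lam-3)*(lam+2))) by nra. assert (lam <= D*lam) by nra. nra. Qed.


Lemma layer0 : forall (w wb : weights) d r j0 s (coef c0 lam : R) j x,
 (1 <= j <= d)%nat -> w 0%nat j0 s j = coef -> (forall t, (1<=t<=d)%nat -> t<>j -> w 0%nat j0 s t = 0) ->
 w 0%nat j0 s 0%nat = c0 -> 0 <= lam ->
 (forall i, (i <= d)%nat -> Rabs (w 0%nat j0 s i - wb 0%nat j0 s i) <= lam) ->
 exists z, hid wb d r 0 j0 s x = sig z /\
   Rabs (z - (coef * x j + c0)) <= lam * (1 + sum1 d (fun t => Rabs (x t))).
Proof.
  intros w wb d r j0 s coef c0 lam j x Hj W1 Wz W0 Hl Hp.
  exists (sum1 d (fun t => wb 0%nat j0 s t * x t) + wb 0%nat j0 s 0%nat). split; [reflexivity|].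
  pose proof (perturb d (w 0%nat j0 s) (wb 0%nat j0 s) x lam Hl Hp) as P.
  rewrite (sum1_single d (fun t => w 0%nat j0 s t * x t) j) in P; auto.
  - rewrite W1, W0 in P. auto.
  - intros t Ht Hne. rewrite Wz by auto. ring.
Qed.

Lemma sig_good0 : forall D lam z, 1 <= D -> 3 <= lam -> D*lam^2 - lam <= z -> 1 - /(8*D) <= sig z.
Proof. intros D lam z HD Hl Hz. pose proof (sigma_ge z).
  assert (6*D <= z) by (pose proof (key6 D lam HD Hl); lra).
  pose proof (exp_sq z ltac:(lra)).
  assert (8*D <= exp z) by nra.
  pose proof (exp_neg_le z (8*D) ltac:(lra) H2). lra. Qed.

Lemma sig_bad0 : forall D lam z, 1 <= D -> 3 <= lam -> z <= -(D*lam^2 - lam) -> sig z <= /8.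
Proof. intros D lam z HD Hl Hz. pose proof (sigma_le z).
  assert (z <= -4) by (pose proof (key6 D lam HD Hl); lra).
  pose proof (exp_le' z (-(4)) H0). assert (E4 : 8 <= exp 4) by (pose proof (exp_sq 4 ltac:(lra)) as X; simpl in X; lra).
  pose proof (exp_neg_le 4 8 ltac:(lra) E4). lra. Qed.

Lemma sig_near : forall z, /8 < sig z -> -4 < z.
Proof. intros z H. destruct (Rlt_le_dec (-4) z); auto.
  pose proof (sigma_le z). pose proof (exp_le' z (-(4)) r). assert (E4 : 8 <= exp 4) by (pose proof (exp_sq 4 ltac:(lra)) as X; simpl in X; lra).
  pose proof (exp_neg_le 4 8 ltac:(lra) E4). lra. Qed.

Lemma near_box : forall (d : nat) (lam delta A : R) (x u v : nat -> R),
  1 <= INR d -> 3 <= lam -> 0 < delta <= 1 -> A = 4 * INR d * lam^2 / delta ->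
  (forall j, (1 <= j <= d)%nat -> -lam <= u j <= lam /\ -lam <= v j <= lam /\
     -(4 + lam*(1 + sum1 d (fun t => Rabs (x t)))) < A*(x j - u j) /\
     -(4 + lam*(1 + sum1 d (fun t => Rabs (x t)))) < A*(v j - x j)) ->
  forall j, (1 <= j <= d)%nat -> u j - delta/2 < x j < v j + delta/2.
Proof.
  intros d lam delta A x u v HD Hl Hdel HA H.
  set (S := sum1 d (fun t => Rabs (x t))) in *.
  set (D := INR d) in *.
  set (T := 4 + lam * (1 + S)).
  assert (HS0 : 0 <= S) by (apply sum1_nonneg; intros; apply Rabs_pos).
  assert (HApos : 0 < A) by (rewrite HA; apply Rdiv_lt_0_compat; nra).
  set (rho := T / A).
  assert (Hrho : rho = T * delta / (4 * D * lam^2)) by (unfold rho; rewrite HA; field; nra).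
  assert (Hbox : forall j, (1 <= j <= d)%nat -> u j - rho < x j < v j + rho).
  { intros j Hj. destruct (H j Hj) as [_ [_ [H1 H2]]]. fold T in H1, H2. unfold rho.
    split.
    - apply (Rmult_lt_reg_l A); auto. replace (A * (u j - T / A)) with (A * u j - T) by (field; lra). nra.
    - apply (Rmult_lt_reg_l A); auto. replace (A * (v j + T / A)) with (A * v j + T) by (field; lra). nra. }
  assert (HS : S <= D * (lam + rho)).
  { unfold S, D. rewrite <- sum1_const. apply sum1_le. intros t Ht.
    destruct (H t Ht) as [Hu [Hv _]]. destruct (Hbox t Ht).
    unfold Rabs; destruct (Rcase_abs (x t)); lra. }
  assert (HT : 0 < T) by (unfold T; nra).
  assert (HDrho : D * rho <= T / (4 * lam^2)).
  { rewrite Hrho. unfold Rdiv. 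
    replace (D * (T * delta * / (4 * D * lam ^ 2))) with (T * delta * / (4 * lam^2)) by (field; nra).
    apply Rmult_le_compat_r. left; apply Rinv_0_lt_compat; nra. nra. }
  assert (H4 : 4 * lam^2 * S <= 4 * D * lam^3 + T).
  { assert (4*lam^2 * (D * rho) <= T).
    { apply (Rmult_le_compat_l (4*lam^2)) in HDrho; [|nra].
      replace (4 * lam ^ 2 * (T / (4 * lam ^ 2))) with T in HDrho by (field; nra). auto. }
    nra. }
  assert (HT2 : T < 2 * D * lam^2).
  { unfold T in *. set (W := lam * S) in *.
    assert (HW : W * (4*lam - 1) <= 4 * D * lam^3 + 4 + lam) by (unfold W; nra).
    destruct (Rlt_le_dec (4 + lam + W) (2 * D * lam^2)) as [Hlt|Hge]; [nra|].
    exfalso.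
    assert ((2*D*lam^2 - 4 - lam) * (4*lam - 1) <= W * (4*lam - 1)) by (apply Rmult_le_compat_r; nra).
    assert (0 < lam * (4*D*lam^2 - 2*D*lam - 4*lam - 16)).
    { apply Rmult_lt_0_compat; [lra|].
      assert (2*lam*(2*lam-1) <= 2*D*lam*(2*lam-1)).
      { apply Rmult_le_compat_r; [nra|]. nra. }
      assert (0 <= (lam-3)*(4*lam+6)) by nra. nra. }
    nra. }
  assert (rho < delta / 2).
  { rewrite Hrho. apply (Rmult_lt_reg_r (4 * D * lam^2)); [nra|].
    unfold Rdiv. replace (T * delta * / (4 * D * lam ^ 2) * (4 * D * lam ^ 2)) with (T * delta) by (field; nra).
    nra. }
  intros j Hj. destruct (Hbox j Hj). lra.
Qed.


Theorem lemma6 :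
  forall (d : nat) (M : R), (1 <= d)%nat ->
  exists c19 : R, 0 < c19 /\
  forall (delta alphan Clip Delta : R) (m : (nat -> R) -> R)
         (L r n K Kn : nat) (a b : nat -> R),
    0 < delta -> delta <= 1 ->
    1 <= alphan -> alphan <= ln (INR n) ->
    lipschitz_d d m Clip ->
    sup_norm_is m M ->
    (2 <= L)%nat -> (2 * d <= r)%nat -> (8 * d <= n)%nat ->
    exp (INR r + 1) <= INR n ->
    (1 <= K)%nat -> (K ^ d <= Kn)%nat ->
    0 < Delta ->
    (forall i, (1 <= i <= d)%nat ->
       - alphan <= a i <= alphan /\ - alphan <= b i <= alphan /\
       b i - a i = Delta) ->
    exists (alpha : nat -> R) (u v : nat -> nat -> R),
      (forall k, (1 <= k <= K ^ d)%nat -> - M <= alpha k <= M) /\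
      (forall k, (1 <= k <= K ^ d)%nat -> forall i, (1 <= i <= d)%nat ->
         a i <= u k i < b i /\ a i <= v k i < b i) /\
      forall (jj : nat -> nat) (w wb : weights),
        (* j_1, ..., j_{K^d} pairwise distinct in {1,...,K_n} *)
        (forall k, (1 <= k <= K ^ d)%nat -> (1 <= jj k <= Kn)%nat) ->
        (forall k k', (1 <= k <= K ^ d)%nat -> (1 <= k' <= K ^ d)%nat ->
           jj k = jj k' -> k = k') ->
        (* conditions on w *)
        (forall k, (1 <= k <= K ^ d)%nat ->
           (forall j, (1 <= j <= d)%nat ->
              w 0%nat (jj k) j j = 4 * INR d * ln (INR n) ^ 2 / delta /\
              w 0%nat (jj k) j 0%nat = - (4 * INR d * ln (INR n) ^ 2 * u k j) / delta /\
              w 0%nat (jj k) (j + d)%nat j = - (4 * INR d * ln (INR n) ^ 2) / delta /\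
              w 0%nat (jj k) (j + d)%nat 0%nat = 4 * INR d * ln (INR n) ^ 2 * v k j / delta) /\
           (forall s t, (1 <= s <= 2 * d)%nat -> (1 <= t <= d)%nat ->
              s <> t -> s <> (t + d)%nat -> w 0%nat (jj k) s t = 0) /\
           (forall t, (1 <= t <= 2 * d)%nat -> w 1%nat (jj k) 1%nat t = 8 * ln (INR n) ^ 2) /\
           w 1%nat (jj k) 1%nat 0%nat = - 8 * ln (INR n) ^ 2 * (2 * INR d - 1 / 2) /\
           (forall t, (2 * d < t <= r)%nat -> w 1%nat (jj k) 1%nat t = 0) /\
           (forall l, (2 <= l <= L)%nat ->
              w l (jj k) 1%nat 1%nat = 6 * ln (INR n) ^ 2 /\
              w l (jj k) 1%nat 0%nat = - 3 * ln (INR n) ^ 2 /\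
              (forall t, (1 < t <= r)%nat -> w l (jj k) 1%nat t = 0))) ->
        (* conditions on \bar w *)
        (forall k, (1 <= k <= K ^ d)%nat -> wb L 1%nat 1%nat (jj k) = alpha k) ->
        (forall k, (1 <= k <= Kn)%nat ->
           (forall s, (1 <= s <= K ^ d)%nat -> k <> jj s) ->
           wb L 1%nat 1%nat k = 0) ->
        (forall l s k i, (l <= L - 1)%nat -> (1 <= s <= K ^ d)%nat ->
           (1 <= k <= r)%nat -> (i <= (if l =? 0 then d else r))%nat ->
           Rabs (w l (jj s) k i - wb l (jj s) k i) <= ln (INR n)) ->
        (* approximation away from the grid neighbourhoods *)
        (forall x : nat -> R,
           (forall i, (1 <= i <= d)%nat -> a i <= x i <= b i) ->
           (forall j i, (j <= K)%nat -> (1 <= i <= d)%nat ->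
              ~ (Rabs (x i - (a i + INR j * (b i - a i) / INR K)) < delta)) ->
           Rabs (fnet wb d r L Kn x - m x)
             <= c19 * (Clip * (Delta / INR K) + INR (K ^ d) * (1 / INR n))) /\
        (* global bound *)
        (delta <= Delta / INR K ->
           forall x : nat -> R,
             Rabs (fnet wb d r L Kn x) <= M * (3 ^ d + INR (K ^ d) / INR n)).
Proof.
  intros d M Hd. exists (INR d + 2 * Rabs M + 1). split.
  { pose proof (pos_INR d). pose proof (Rabs_pos M). lra. }
  intros delta alphan Clip Delta m L r n K Kn a b Hdel0 Hdel1 Hal1 Hal2 Hlip Hsup HL Hr Hn Hexp HK HKn HDel Hab.
  set (lam := ln (INR n)) in *.
  assert (HnR : 0 < INR n) by (pose proof (exp_pos (INR r + 1)); lra).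
  assert (Hlr : INR r + 1 <= lam).
  { destruct (Rle_lt_dec (INR r + 1) lam) as [h|h]; auto. exfalso.
    pose proof (exp_increasing _ _ h). unfold lam in H. rewrite exp_ln in H by auto. lra. }
  assert (HrD : 2 * INR d <= INR r) by (rewrite <- (mult_INR 2); apply le_INR; lia).
  assert (HD1 : 1 <= INR d) by (apply (le_INR 1); lia).
  assert (Hl3 : 3 <= lam) by lra.
  assert (Hmb : forall y, Rabs (m y) <= M).
  { intros y. destruct Hsup as [Hub _]. apply Hub. exists y; auto. }
  assert (HM : 0 <= M) by (pose proof (Hmb (fun _ => 0)); pose proof (Rabs_pos (m (fun _ => 0))); lra).
  assert (HClip : 0 <= Clip).
  { pose proof (Hlip (fun _ => 0) (fun _ => 1)). unfold dist_d in H.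
    rewrite (sum1_ext d _ (fun _ => 1)) in H by (intros; ring). rewrite sum1_const, Rmult_1_r in H.
    pose proof (sqrt_lt_R0 (INR d) ltac:(lra)). pose proof (Rabs_pos (m (fun _ => 0) - m (fun _ => 1))).
    destruct (Rle_lt_dec 0 Clip); auto. nra. }
  assert (HKR : 1 <= INR K) by (apply (le_INR 1); lia).
  set (q := Delta / INR K) in *.
  assert (Hq : 0 < q) by (unfold q; apply Rdiv_lt_0_compat; lra).
  assert (HDq : Delta = INR K * q) by (unfold q; field; lra).
  set (N := (K ^ d)%nat) in *.
  assert (HN : 1 <= INR N) by (apply (le_INR 1); unfold N; pose proof (Nat.pow_le_mono_l 1 K d HK); rewrite Nat.pow_1_l in H; lia).
  set (tau := exp (- lam^2)).
  assert (Htau0 : 0 < tau) by apply exp_pos.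
  assert (Htau : tau <= / INR n).
  { unfold tau. rewrite <- (exp_ln (INR n)) by auto. fold lam. rewrite <- exp_Ropp. apply exp_le'. nra. }
  assert (Hgrid : forall x, (forall j i, (j <= K)%nat -> (1 <= i <= d)%nat ->
              ~ (Rabs (x i - (a i + INR j * (b i - a i) / INR K)) < delta)) ->
     forall i, (1 <= i <= d)%nat -> forall j, (j <= K)%nat -> ~ Rabs (x i - (a i + INR j * q)) < delta).
  { intros x Hg i Hi j Hj. replace (INR j * q) with (INR j * (b i - a i) / INR K). apply Hg; auto.
    destruct (Hab i Hi) as [_ [_ E]]. rewrite E. unfold q, Rdiv. ring. }
  assert (Hbq : forall i, (1 <= i <= d)%nat -> b i = a i + INR K * q).
  { intros i Hi. destruct (Hab i Hi) as [_ [_ E]]. lra. }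
  destruct (Rle_dec delta q) as [Hsmall|Hbig].
  2:{
    exists (fun _ => 0), (fun _ i => a i), (fun _ i => a i).
    split; [intros; lra|]. split.
    { intros k Hk i Hi. pose proof (Hbq i Hi). nra. }
    intros jj w wb _ _ _ _ _ _. split.
    - intros x Hx Hg. exfalso.
      pose proof (Hx 1%nat ltac:(lia)) as Hx1. rewrite Hbq in Hx1 by lia.
      destruct (grid_cell (a 1%nat) q delta (x 1%nat) K HK Hq Hdel0 Hx1 (Hgrid x Hg 1%nat ltac:(lia))) as [_ [G1 G2]].
      rewrite S_INR in G2. lra.
    - intros; lra. }
  set (p := fun k i => a i + INR (dig K (i-1) (k-1)) * q).
  assert (Hdigr : forall k i, INR (dig K i k) + 1 <= INR K).
  { intros k i. rewrite <- S_INR. apply le_INR. pose proof (dig_lt K i k HK). lia. }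
  assert (Hp : forall k i, (1 <= i <= d)%nat -> a i <= p k i <= a i + INR K * q - q).
  { intros k i Hi. unfold p. pose proof (Hdigr (k-1)%nat (i-1)%nat). pose proof (pos_INR (dig K (i-1) (k-1))). nra. }
  assert (Habl : forall i, (1 <= i <= d)%nat -> -lam <= a i /\ a i + INR K * q <= lam).
  { intros i Hi. destruct (Hab i Hi) as [H1 [H2 _]]. rewrite <- Hbq by auto. lra. }
  exists (fun k => m (p k)), (fun k i => p k i + delta/2), (fun k i => p k i + q - delta/2).
  split.
  { intros k Hk. apply Rabs_le_between, Hmb. }
  split.
  { intros k Hk i Hi. pose proof (Hp k i Hi). pose proof (Hbq i Hi). lra. }
  intros jj w wb Hjr Hinj Hw Hwb1 Hwb0 Hpert.
  set (A := 4 * INR d * lam ^ 2 / delta).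
  assert (HA : 0 < A) by (unfold A; apply Rdiv_lt_0_compat; nra).
  assert (HAd : A * (delta / 2) = 2 * INR d * lam^2) by (unfold A; field; lra).
  set (ind := fun k x => hid wb d r (L-1) (jj k) 1 x).
  assert (Hfnet : forall x, fnet wb d r L Kn x = sum1 N (fun k => m (p k) * ind k x)).
  { intros x. unfold fnet. rewrite (reindex N Kn jj); auto.
    - apply sum1_ext. intros k Hk. rewrite Hwb1 by auto. reflexivity.
    - intros j Hj Hs. rewrite Hwb0 by auto. ring. }
  assert (Hcube : forall k x, (1 <= k <= N)%nat ->
     ((forall s, (1 <= s <= 2*d)%nat -> 1 - /(8*INR d) <= hid wb d r 0 (jj k) s x) -> 1 - tau <= ind k x) /\
     ((exists s, (1 <= s <= 2*d)%nat /\ hid wb d r 0 (jj k) s x <= /8) -> ind k x <= tau)).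
  { intros k x Hk. destruct (Hw k Hk) as [_ [_ [W1 [W0 [Wz Wl]]]]].
    destruct (and_layer w wb d r (jj k) lam x Hl3 Hlr Hd Hr W1 ltac:(rewrite W0; ring) Wz
       (fun i Hi => Hpert 1%nat k 1%nat i ltac:(lia) Hk ltac:(lia) Hi)) as [A1 A2].
    assert (Wl' : forall l, (2 <= l <= L)%nat -> w l (jj k) 1%nat 1%nat = 6*lam^2 /\ w l (jj k) 1%nat 0%nat = -3*lam^2 /\
       forall t, (1 < t <= r)%nat -> w l (jj k) 1%nat t = 0).
    { intros l Hl. destruct (Wl l Hl) as [X1 [X2 X3]]. split; [auto|split; [rewrite X2; ring|auto]]. }
    assert (Hp' : forall l i, (1 <= l <= L-1)%nat -> (i <= r)%nat -> Rabs (w l (jj k) 1%nat i - wb l (jj k) 1%nat i) <= lam).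
    { intros l i Hl Hi. apply Hpert; auto; try lia. destruct l; [lia|]. simpl. auto. }
    destruct (deep_layers w wb d r L (jj k) lam x Hl3 Hlr ltac:(lia) Wl' Hp' (L-1)%nat ltac:(lia)) as [D1 D2].
    unfold ind. split; intros HH; auto. }
  set (Sx := fun x => sum1 d (fun t => Rabs (x t))).
  assert (Hz : forall k x j, (1 <= k <= N)%nat -> (1 <= j <= d)%nat ->
     (exists z, hid wb d r 0 (jj k) j x = sig z /\ Rabs (z - A * (x j - (p k j + delta/2))) <= lam * (1 + Sx x)) /\
     (exists z, hid wb d r 0 (jj k) (j+d) x = sig z /\ Rabs (z - A * ((p k j + q - delta/2) - x j)) <= lam * (1 + Sx x))).
  { intros k x j Hk Hj. destruct (Hw k Hk) as [W0 [Wst _]]. destruct (W0 j Hj) as [X1 [X2 [X3 X4]]].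
    split.
    - destruct (layer0 w wb d r (jj k) j _ _ lam j x Hj X1 ltac:(intros t Ht Hne; apply Wst; lia) X2 ltac:(lra)
        (fun i Hi => Hpert 0%nat k j i ltac:(lia) Hk ltac:(lia) Hi)) as [z [Z1 Z2]].
      exists z. split; auto. unfold Sx. replace (A * (x j - (p k j + delta / 2))) with
        (4 * INR d * lam ^ 2 / delta * x j + - (4 * INR d * lam ^ 2 * (p k j + delta / 2)) / delta) by (unfold A; field; lra).
      auto.
    - destruct (layer0 w wb d r (jj k) (j+d)%nat _ _ lam j x Hj X3 ltac:(intros t Ht Hne; apply Wst; lia) X4 ltac:(lra)
        (fun i Hi => Hpert 0%nat k (j+d)%nat i ltac:(lia) Hk ltac:(lia) Hi)) as [z [Z1 Z2]].
      exists z. split; auto. unfold Sx. replace (A * (p k j + q - delta / 2 - x j)) with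
        (- (4 * INR d * lam ^ 2) / delta * x j + 4 * INR d * lam ^ 2 * (p k j + q - delta / 2) / delta) by (unfold A; field; lra).
      auto. }
  split.
  - intros x Hx Hg.
    pose proof (Hgrid x Hg) as Hgq.
    set (c := fun i => cell (a i) q (x i)).
    assert (Hc : forall i, (1 <= i <= d)%nat -> (c i < K)%nat /\ a i + INR (c i) * q + delta <= x i /\ x i <= a i + INR (S (c i)) * q - delta).
    { intros i Hi. pose proof (Hx i Hi). rewrite Hbq in H by auto. apply grid_cell; auto. }
    set (k0 := S (enc K d (fun i => c (S i)))).
    assert (Hk0 : (1 <= k0 <= N)%nat).
    { unfold k0, N. pose proof (enc_lt K d (fun i => c (S i)) HK (fun i Hi => proj1 (Hc (S i) ltac:(lia)))). lia. }
    assert (Hdig0 : forall i, (1 <= i <= d)%nat -> dig K (i-1) (k0-1) = c i).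
    { intros i Hi. unfold k0. replace (S (enc K d (fun i => c (S i))) - 1)%nat with (enc K d (fun i => c (S i))) by lia.
      rewrite (dig_enc K d (fun i => c (S i)) HK (fun i0 Hi0 => proj1 (Hc (S i0) ltac:(lia))) (i-1)%nat ltac:(lia)).
      f_equal. lia. }
    assert (Hxl : forall t, (1 <= t <= d)%nat -> Rabs (x t) <= lam).
    { intros t Ht. destruct (Habl t Ht). pose proof (Hx t Ht). rewrite Hbq in H1 by auto. unfold Rabs; destruct (Rcase_abs (x t)); lra. }
    assert (HS : Sx x <= INR d * lam).
    { unfold Sx. rewrite <- sum1_const. apply sum1_le. auto. }
    assert (HS0 : 0 <= Sx x) by (apply sum1_nonneg; intros; apply Rabs_pos).
    assert (HE : lam * (1 + Sx x) <= lam + INR d * lam^2) by nra.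
    assert (Hgood : 1 - tau <= ind k0 x).
    { apply (proj1 (Hcube k0 x Hk0)). intros s Hs.
      destruct (le_lt_dec s d) as [Hsd|Hsd].
      - destruct (proj1 (Hz k0 x s Hk0 ltac:(lia))) as [z [Z1 Z2]]. rewrite Z1.
        apply (sig_good0 (INR d) lam); auto. apply Rabs_le_between in Z2.
        assert (A * (delta/2) <= A * (x s - (p k0 s + delta/2))).
        { apply Rmult_le_compat_l; [lra|]. unfold p. rewrite Hdig0 by lia. destruct (Hc s ltac:(lia)) as [_ [C1 C2]]. lra. }
        lra.
      - replace s with ((s - d) + d)%nat by lia.
        destruct (proj2 (Hz k0 x (s-d)%nat Hk0 ltac:(lia))) as [z [Z1 Z2]]. rewrite Z1.
        apply (sig_good0 (INR d) lam); auto. apply Rabs_le_between in Z2.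
        assert (A * (delta/2) <= A * ((p k0 (s-d)%nat + q - delta/2) - x (s-d)%nat)).
        { apply Rmult_le_compat_l; [lra|]. unfold p. rewrite Hdig0 by lia. destruct (Hc (s-d)%nat ltac:(lia)) as [_ [C1 C2]].
          rewrite S_INR in C2. lra. }
        lra. }
    assert (Hbad : forall k, (1 <= k <= N)%nat -> k <> k0 -> ind k x <= tau).
    { intros k Hk Hne. apply (proj2 (Hcube k x Hk)).
      destruct (digits_differ K d k k0 HK Hk Hk0 Hne) as [i [Hi Hdi]]. rewrite Hdig0 in Hdi by auto.
      destruct (Hc i Hi) as [_ [C1 C2]]. rewrite S_INR in C2.
      assert (Hpk : p k i = a i + INR (dig K (i-1) (k-1)) * q) by reflexivity.
      destruct (lt_eq_lt_dec (dig K (i-1) (k-1)) (c i)) as [[Hlt|Heq]|Hgt]; [|contradiction|].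
      - exists (i + d)%nat. split; [lia|].
        destruct (proj2 (Hz k x i Hk Hi)) as [z [Z1 Z2]]. rewrite Z1. apply (sig_bad0 (INR d) lam); auto.
        apply Rabs_le_between in Z2.
        assert (INR (S (dig K (i-1) (k-1))) <= INR (c i)) by (apply le_INR; lia). rewrite S_INR in H.
        assert (A * (delta/2) <= A * (x i - (p k i + q - delta/2))).
        { apply Rmult_le_compat_l; [lra|]. rewrite Hpk. nra. }
        lra.
      - exists i. split; [lia|].
        destruct (proj1 (Hz k x i Hk Hi)) as [z [Z1 Z2]]. rewrite Z1. apply (sig_bad0 (INR d) lam); auto.
        apply Rabs_le_between in Z2.
        assert (INR (S (c i)) <= INR (dig K (i-1) (k-1))) by (apply le_INR; lia). rewrite S_INR in H.
        assert (A * (delta/2) <= A * ((p k i + delta/2) - x i)).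
        { apply Rmult_le_compat_l; [lra|]. rewrite Hpk. nra. }
        lra. }
    rewrite Hfnet. rewrite (sum1_split_point N _ k0 Hk0).
    set (R0 := sum1 N (fun k => if Nat.eq_dec k k0 then 0 else m (p k) * ind k x)).
    assert (HR : Rabs R0 <= INR N * (M * tau)).
    { unfold R0. rewrite <- sum1_const. apply sum1_abs. intros k Hk. destruct (Nat.eq_dec k k0).
      - rewrite Rabs_R0. nra.
      - rewrite Rabs_mult. pose proof (Hmb (p k)). pose proof (Hbad k Hk n0).
        pose proof (hid_bounds wb d r (L-1) (jj k) 1%nat x). fold (ind k x) in H1.
        rewrite (Rabs_right (ind k x)) by lra. apply Rmult_le_compat; auto using Rabs_pos; lra. }
    assert (HLp : Rabs (m (p k0) - m x) <= Clip * (INR d * q)).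
    { eapply Rle_trans; [apply Hlip|]. apply Rmult_le_compat_l; auto. unfold dist_d.
      rewrite <- (sqrt_pow2 (INR d * q)) by nra. apply sqrt_le_1_alt.
      apply Rle_trans with (sum1 d (fun _ => q^2)).
      - apply sum1_le. intros i Hi. unfold p. rewrite Hdig0 by auto. destruct (Hc i Hi) as [_ [C1 C2]].
        rewrite S_INR in C2. nra.
      - rewrite sum1_const. nra. }
    pose proof (hid_bounds wb d r (L-1) (jj k0) 1%nat x) as HI. fold (ind k0 x) in HI.
    replace (m (p k0) * ind k0 x + R0 - m x) with (m (p k0) * (ind k0 x - 1) + (m (p k0) - m x) + R0) by ring.
    assert (HI1 : Rabs (m (p k0) * (ind k0 x - 1)) <= M * tau).
    { rewrite Rabs_mult. pose proof (Hmb (p k0)). apply Rmult_le_compat; auto using Rabs_pos.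
      unfold Rabs; destruct (Rcase_abs (ind k0 x - 1)); lra. }
    pose proof (Rabs_triang (m (p k0) * (ind k0 x - 1) + (m (p k0) - m x)) R0).
    pose proof (Rabs_triang (m (p k0) * (ind k0 x - 1)) (m (p k0) - m x)).
    rewrite (Rabs_right M) by lra.
    set (iv := / INR n).
    assert (Hiv : 1 / INR n = iv) by (unfold iv; field; lra).
    rewrite Hiv.
    assert (0 < iv) by (unfold iv; apply Rinv_0_lt_compat; lra).
    assert (M * tau <= M * iv) by (apply Rmult_le_compat_l; lra).
    assert (0 <= M * iv) by (apply Rmult_le_pos; lra).
    assert (M * iv <= M * iv * INR N) by (pose proof (Rmult_le_compat_l (M*iv) 1 (INR N) ltac:(lra) HN); lra).
    assert (INR N * (M * tau) <= INR N * (M * iv)) by (apply Rmult_le_compat_l; lra).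
    assert (0 <= M * Clip * q) by (apply Rmult_le_pos; nra).
    assert (0 <= Clip * q) by nra.
    assert (0 <= INR d * INR N * iv) by (apply Rmult_le_pos; nra).
    assert (0 <= INR N * iv) by nra.
    nra.
  - intros Hdq x. rewrite Hfnet.
    set (near := fun k => forall s, (1 <= s <= 2*d)%nat -> /8 < hid wb d r 0 (jj k) s x).
    assert (Hnn : forall k, (1 <= k <= N)%nat -> ~ near k -> ind k x <= tau).
    { intros k Hk Hn'. apply (proj2 (Hcube k x Hk)). apply NNPP. intros Hc. apply Hn'. intros s Hs.
      destruct (Rlt_le_dec (/8) (hid wb d r 0 (jj k) s x)); auto. exfalso; apply Hc; exists s; auto. }
    assert (Hbox : forall k, (1 <= k <= N)%nat -> near k -> forall j, (1 <= j <= d)%nat -> p k j < x j < p k j + q).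
    { intros k Hk Hnk.
      assert (HH : forall j, (1 <= j <= d)%nat -> (p k j + delta/2) - delta/2 < x j < (p k j + q - delta/2) + delta/2).
      { apply (near_box d lam delta A x (fun j => p k j + delta/2) (fun j => p k j + q - delta/2)); auto; try lra; try reflexivity.
        intros j Hj. pose proof (Hp k j Hj). destruct (Habl j Hj).
        split; [lra|]. split; [lra|].
        destruct (Hz k x j Hk Hj) as [[z1 [Z1 Z1']] [z2 [Z2 Z2']]].
        pose proof (Hnk j ltac:(lia)) as N1. pose proof (Hnk (j+d)%nat ltac:(lia)) as N2.
        rewrite Z1 in N1. rewrite Z2 in N2. apply sig_near in N1. apply sig_near in N2.
        apply Rabs_le_between in Z1'. apply Rabs_le_between in Z2'. unfold Sx in *. split; lra. }
      intros j Hj. specialize (HH j Hj). lra. }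
    assert (Huniq : forall k k', (1 <= k <= N)%nat -> (1 <= k' <= N)%nat -> near k -> near k' -> k = k').
    { intros k k' Hk Hk' Nk Nk'. destruct (Nat.eq_dec k k') as [e|Hne]; auto. exfalso.
      destruct (digits_differ K d k k' HK Hk Hk' Hne) as [i [Hi Hdi]].
      pose proof (Hbox k Hk Nk i Hi). pose proof (Hbox k' Hk' Nk' i Hi). unfold p in *.
      destruct (lt_eq_lt_dec (dig K (i-1) (k-1)) (dig K (i-1) (k'-1))) as [[Hlt|Heq]|Hgt]; [|contradiction|].
      - assert (INR (S (dig K (i-1) (k-1))) <= INR (dig K (i-1) (k'-1))) by (apply le_INR; lia). rewrite S_INR in H1. nra.
      - assert (INR (S (dig K (i-1) (k'-1))) <= INR (dig K (i-1) (k-1))) by (apply le_INR; lia). rewrite S_INR in H1. nra. }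
    assert (H3 : 1 <= 3^d) by (apply pow_R1_Rle; lra).
    assert (HNt : INR N * (M * tau) <= M * (INR N / INR n)).
    { unfold Rdiv. replace (M * (INR N * / INR n)) with (INR N * (M * / INR n)) by ring.
      apply Rmult_le_compat_l; [lra|]. apply Rmult_le_compat_l; lra. }
    assert (HNn : 0 <= INR N / INR n) by (apply Rmult_le_pos; [lra|left; apply Rinv_0_lt_compat; lra]).
    assert (M <= M * 3^d) by (pose proof (Rmult_le_compat_l M 1 (3^d) HM H3); lra).
    destruct (classic (exists k0, (1 <= k0 <= N)%nat /\ near k0)) as [[k0 [Hk0 Nk0]]|Hno].
    + rewrite (sum1_split_point N _ k0 Hk0).
      set (R0 := sum1 N (fun k => if Nat.eq_dec k k0 then 0 else m (p k) * ind k x)).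
      assert (HR : Rabs R0 <= INR N * (M * tau)).
      { unfold R0. rewrite <- sum1_const. apply sum1_abs. intros k Hk. destruct (Nat.eq_dec k k0).
        - rewrite Rabs_R0. nra.
        - rewrite Rabs_mult. pose proof (Hmb (p k)).
          assert (NK : ~ near k) by (intros Nk; apply n0; apply (Huniq k k0); auto).
          pose proof (Hnn k Hk NK).
          pose proof (hid_bounds wb d r (L-1) (jj k) 1%nat x) as HB. fold (ind k x) in HB.
          rewrite (Rabs_right (ind k x)) by lra. apply Rmult_le_compat; auto using Rabs_pos; lra. }
      assert (Rabs (m (p k0) * ind k0 x) <= M).
      { rewrite Rabs_mult. pose proof (Hmb (p k0)).
        pose proof (hid_bounds wb d r (L-1) (jj k0) 1%nat x) as HB. fold (ind k0 x) in HB.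
        rewrite (Rabs_right (ind k0 x)) by lra. pose proof (Rabs_pos (m (p k0))) as HP.
        pose proof (Rmult_le_compat_l (Rabs (m (p k0))) (ind k0 x) 1 HP ltac:(lra)). lra. }
      pose proof (Rabs_triang (m (p k0) * ind k0 x) R0). nra.
    + assert (Rabs (sum1 N (fun k => m (p k) * ind k x)) <= INR N * (M * tau)).
      { rewrite <- sum1_const. apply sum1_abs. intros k Hk.
        rewrite Rabs_mult. pose proof (Hmb (p k)).
        assert (NK : ~ near k) by (intros Nk; apply Hno; exists k; auto).
        pose proof (Hnn k Hk NK).
        pose proof (hid_bounds wb d r (L-1) (jj k) 1%nat x) as HB. fold (ind k x) in HB.
        rewrite (Rabs_right (ind k x)) by lra. apply Rmult_le_compat; auto using Rabs_pos; lra. }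
      pose proof (Rmult_le_compat_l M 0 (3^d) HM ltac:(lra)). nra.
Qed.
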